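(* Let $k\ge1$, $m\ge1$, and let $y^0,\bar y^0,\dots,y^{2k},\bar y^{2k}\in\{0,1\}^m$ be $4k+2$ pairwise distinct vectors satisfying $$y^i+\bar y^i=y^0+\bar y^0\quad\text{for all } i\in\{0,\dots,2k\}.$$ With $J$, $j_0$, $U_i$, $\bar U_i$ as defined in the context, there exists $t\in\{2,3,\dots,2k\}$ such that the set $U_0\triangle U_1\triangle U_t$ is different from every $U_p$ and from every $\bar U_p$, for $0\le p\le 2k$.
   Context: **Index sets.** - $I=\{i\in[m]: y^0_i=\bar y^0_i\}$ and $J=[m]\setminus I=\{j: y^0_j+\bar y^0_j=1\}$. The set $J$ is nonempty. - Fix any $j_0\in J$. - For $i\in\{0,\dots,2k\}$, let $U_i=\{j\in J: y^i_j=1\}$ if $y^i_{j_0}=1$, and $U_i=\{j\in J:\bar y^i_j=1\}$ otherwise. - Let $\bar U_i=J\setminus U_i$. Here $\triangle$ denotes symmetric difference of sets. *)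

(* Defs.v *)
From mathcomp Require Import all_boot.
Set Implicit Arguments. Unset Strict Implicit. Unset Printing Implicit Defensive.

(* Binary vectors in {0,1}^m are boolean finite functions on 'I_m;
   a coordinate b : bool is read as the number 0/1 via nat_of_bool. *)
Notation bvec m := {ffun 'I_m -> bool}.

Definition Jset m (y0 yb0 : bvec m) : {set 'I_m} :=
  [set j | (y0 j + yb0 j)%N == 1%N].

Definition Uset m (J : {set 'I_m}) (j0 : 'I_m) (yi ybi : bvec m) : {set 'I_m} :=
  if yi j0 then [set j in J | yi j] else [set j in J | ybi j].

Definition Ubar m (J : {set 'I_m}) (j0 : 'I_m) (yi ybi : bvec m) : {set 'I_m} :=
  J :\: Uset J j0 yi ybi.

Definition symdiff (T : finType) (A B : {set T}) : {set T} :=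
  (A :\: B) :|: (B :\: A).

(* Main.v *)
Require Import Defs.
From mathcomp Require Import all_boot.
From mathcomp Require Import zify.

Lemma in_symdiff (T : finType) (A B : {set T}) x :
  (x \in symdiff A B) = (x \in A) (+) (x \in B).
Proof. rewrite /symdiff !inE; by case: (x \in A); case: (x \in B). Qed.

Lemma in_Uset m (J : {set 'I_m}) j0 (yi ybi : bvec m) j :
  (j \in Uset J j0 yi ybi) = (j \in J) && (if yi j0 then yi j else ybi j).
Proof. rewrite /Uset; case: (yi j0); by rewrite inE. Qed.

Lemma even_invol (T : finType) (g : T -> T) (S : {set T}) (P : pred T) :
  (forall x, g (g x) = x) -> (forall x, P (g x) = ~~ P x) ->
  g @: S \subset S -> ~~ odd #|S|.
Proof.
move=> gK gP sub.
have ginj : injective g := can_inj gK.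
set Si := S :&: [set x | P x].
set So := S :\: [set x | P x].
have h1 : #|Si| <= #|So|.
  rewrite -(card_imset _ ginj); apply: subset_leq_card.
  apply/subsetP => _ /imsetP [x xi ->]; move: xi; rewrite !inE => /andP [xS Px].
  rewrite gP Px /=; apply: (subsetP sub); exact: imset_f.
have h2 : #|So| <= #|Si|.
  rewrite -(card_imset _ ginj); apply: subset_leq_card.
  apply/subsetP => _ /imsetP [x xi ->]; move: xi; rewrite !inE => /andP [Px xS].
  rewrite gP Px /=; apply/andP; split => //; apply: (subsetP sub); exact: imset_f.
rewrite -(cardsID [set x | P x] S) -/Si -/So.
have -> : #|So| = #|Si| by apply/eqP; rewrite eqn_leq h1 h2.
by rewrite addnn odd_double.
Qed.

Theorem lemma2 (k m : nat) (hk : (1 <= k)%N) (hm : (1 <= m)%N)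
  (y yb : 'I_(2 * k).+1 -> bvec m)
  (y_inj : injective y) (yb_inj : injective yb)
  (y_yb_diff : forall i j, y i != yb j)
  (hsum : forall (i : 'I_(2 * k).+1) (j : 'I_m),
      (y i j + yb i j)%N = (y ord0 j + yb ord0 j)%N)
  (j0 : 'I_m) (hj0 : j0 \in Jset (y ord0) (yb ord0)) :
  let J := Jset (y ord0) (yb ord0) in
  let U := fun i : 'I_(2 * k).+1 => Uset J j0 (y i) (yb i) in
  let Ub := fun i : 'I_(2 * k).+1 => Ubar J j0 (y i) (yb i) in
  exists t : 'I_(2 * k).+1, (2 <= t)%N /\
    forall p : 'I_(2 * k).+1,
      symdiff (symdiff (U ord0) (U (inord 1))) (U t) != U p /\
      symdiff (symdiff (U ord0) (U (inord 1))) (U t) != Ub p.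
Proof.
move=> J U Ub.
have j0U : forall i, j0 \in U i.
  move=> i; rewrite /U in_Uset hj0 /=.
  move: (hsum i j0) hj0; rewrite /Jset inE.
  case: (y i j0); case: (yb i j0) => //=.
  by move=> <-.
pose top i := if y i j0 then y i else yb i.
have topJ : forall i j, j \notin J -> top i j = y ord0 j.
  move=> i j; rewrite /J /Jset inE /top.
  move: (hsum i j); case: (y i j0);
  case: (y i j); case: (yb i j); case: (y ord0 j); case: (yb ord0 j) => //=.
have Uinj : injective U.
  move=> i p E.
  have Etop : top i = top p.
    apply/ffunP => j; case: (boolP (j \in J)) => hj; last by rewrite !topJ.
    move/setP: E => /(_ j); rewrite /U !in_Uset hj /=.
    by rewrite /top; case: (y i j0); case: (y p j0).
  move: Etop; rewrite /top; case: (y i j0); case: (y p j0) => Et.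
  - exact: y_inj.
  - by move: (y_yb_diff i p); rewrite Et eqxx.
  - by move: (y_yb_diff p i); rewrite Et eqxx.
  - exact: yb_inj.
have i1 : nat_of_ord (inord 1 : 'I_(2 * k).+1) = 1.
  by rewrite inordK //; lia.
set A := symdiff (U ord0) (U (inord 1)).
pose g X := symdiff A X.
case: (boolP [exists t : 'I_(2 * k).+1, (2 <= t) && [forall p, g (U t) != U p]]).
  move/existsP => [t /andP [ht /forallP hp]].
  exists t; split => // p; split; first exact: hp p.
  apply/eqP => E.
  have : j0 \in symdiff A (U t) by rewrite /A !in_symdiff !j0U.
  by rewrite E /Ub /Ubar inE j0U.
move=> /existsPn H; exfalso.
have AN : A != set0.
  apply/eqP => A0.
  have : U ord0 = U (inord 1).
    apply/setP => x; move/setP: A0 => /(_ x).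
    rewrite in_symdiff inE; by case: (x \in U ord0); case: (x \in U (inord 1)).
  move/Uinj => /(congr1 val) /=; by rewrite i1.
case/set0Pn: AN => e eA.
have gK : forall X, g (g X) = X.
  move=> X; apply/setP => x; rewrite /g !in_symdiff.
  by rewrite addbA addbb addFb.
have gP : forall X, (fun X => e \in X) (g X) = ~~ (fun X => e \in X) X.
  by move=> X /=; rewrite /g in_symdiff eA.
have sub : g @: (U @: setT) \subset U @: setT.
  apply/subsetP => _ /imsetP [_ /imsetP [t _ ->] ->].
  case: (leqP 2 t) => ht.
    move: (H t); rewrite ht /= => /forallPn [p /negPn /eqP ->].
    exact: imset_f.
  have [t0 | t1] : t = ord0 \/ t = inord 1.
    case: t ht => [[|[|t']] ht] /= ht2; [left | right | ]; try lia.
      exact: val_inj.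
    by apply: val_inj; rewrite /= i1.
  - rewrite t0 (_ : g (U ord0) = U (inord 1)); first exact: imset_f.
    apply/setP => x; rewrite /g /A !in_symdiff.
    by case: (x \in U ord0); case: (x \in U (inord 1)).
  - rewrite t1 (_ : g (U (inord 1)) = U ord0); first exact: imset_f.
    apply/setP => x; rewrite /g /A !in_symdiff.
    by case: (x \in U ord0); case: (x \in U (inord 1)).
move: (@even_invol _ g _ (fun X => e \in X) gK gP sub).
by rewrite card_imset // cardsT card_ord /= oddM.
Qed.
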